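(* A GFNN $\mathcal{N}=(V,E,V_{\mathrm{in}},V_{\mathrm{out}},\Omega,\Theta,\Lambda)$ is irreducible with respect to the nonlinearity $\tanh$ if and only if there do not exist nodes $u_1,u_2\in V\setminus V_{\mathrm{in}}$, $u_1\ne u_2$, and an $s\in\{-1,1\}$ such that $P:=\mathrm{par}(u_1)=\mathrm{par}(u_2)$, $\omega_{u_1v}=s\,\omega_{u_2v}$ for all $v\in P$, and $\theta_{u_1}=s\,\theta_{u_2}$.
   Context: A GFNN is a tuple $(V,E,V_{\mathrm{in}},V_{\mathrm{out}},\Omega,\Theta,\Lambda)$ where $(V,E)$ is a finite loopless directed acyclic graph, $V_{\mathrm{in}}$ is the set of nodes without incoming edges, $V_{\mathrm{out}}\subset V\setminus V_{\mathrm{in}}$, $\Omega=\{\omega_{\tilde vv}\in\mathbb{R}\setminus\{0\}:(v,\tilde v)\in E\}$, $\Theta=\{\theta_v\in\mathbb{R}:v\in V\setminus V_{\mathrm{in}}\}$, and $\Lambda$ consists of real output scalars. $\mathrm{par}(u)=\{v:(v,u)\in E\}$. An affine symmetry of a nonlinearity $\rho$ is $(\zeta,\{(\alpha_s,\beta_s,\gamma_s)\}_{s\in\mathcal{I}})$ with $\mathcal{I}$ nonempty finite, real entries, $\sum_s\alpha_s\rho(\beta_st+\gamma_s)=\zeta$ for all $t\in\mathbb{R}$, and no proper $\mathcal{I}'\subsetneq\mathcal{I}$ with $\{\rho(\beta_s\cdot+\gamma_s)\}_{s\in\mathcal{I}'}\cup\{\mathbf1\}$ linearly dependent. $\mathcal{N}$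 is $\rho$-reducible if there exist a nonempty $U\subset V$ whose nodes have a common parent set $P$, nonzero reals $\kappa_v$ ($v\in P$) and $\beta_u$ ($u\in U$) with $\omega_{uv}=\beta_u\kappa_v$ for all $u\in U,v\in P$, and $\zeta\in\mathbb{R}$ and nonzero reals $\alpha_u$ such that $(\zeta,\{(\alpha_u,\beta_u,\theta_u)\}_{u\in U})$ is an affine symmetry of $\rho$; otherwise $\mathcal{N}$ is irreducible. *)

(* Defs.v *)
From HB Require Import structures.
From mathcomp Require Import all_boot all_order all_algebra.
From mathcomp Require Import reals sequences.
From mathcomp.analysis Require Import exp.
Set Implicit Arguments. Unset Strict Implicit. Unset Printing Implicit Defensive.
Import Order.TTheory GRing.Theory Num.Theory.
Local Open Scope ring_scope.

Definition tanh {R : realType} (x : R) : R :=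
  (expR x - expR (- x)) / (expR x + expR (- x)).

Section GFNN.
Variables (R : realType) (V : finType).

Definition acyclic (E : rel V) : Prop :=
  forall (v : V) (p : seq V), path E v p -> last v p = v -> p = [::].

Definition inputs (E : rel V) : {set V} := [set u | [forall v, ~~ E v u]].

Definition par (E : rel V) (u : V) : {set V} := [set v | E v u].

(* A GFNN on node set V.  [E v u] means (v,u) is an edge;
   [omega u v] is the weight omega_{uv} of the edge (v,u);
   [theta u] is the bias of u (meaningful for u not an input node);
   [Lambda] gives the output scalars. *)
Record GFNN := {
  E : rel V;
  Vout : {set V};
  omega : V -> V -> R;
  theta : V -> R;
  Lambda : V -> R;
  E_loopless : forall v, ~~ E v v;
  E_acyclic : acyclic E;
  Vout_sub : Vout \subset ~: inputs E;
  omega_neq0 : forall v u, E v u -> omega u v != 0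
}.

Definition lin_dep_with_one (rho : R -> R) (I : finType) (S' : {set I})
  (beta gamma : I -> R) : Prop :=
  exists (c : I -> R) (c0 : R),
    (c0 != 0 \/ exists2 s, s \in S' & c s != 0) /\
    forall t : R, \sum_(s in S') c s * rho (beta s * t + gamma s) + c0 = 0.

Definition affine_symmetry (rho : R -> R) (I : finType) (S : {set I})
  (zeta : R) (alpha beta gamma : I -> R) : Prop :=
  [/\ S != set0,
      forall t : R, \sum_(s in S) alpha s * rho (beta s * t + gamma s) = zeta &
      forall S' : {set I}, S' \proper S -> ~ lin_dep_with_one rho S' beta gamma].

Definition reducible (rho : R -> R) (N : GFNN) : Prop :=
  exists (U : {set V}) (P : {set V}),
    [/\ U != set0, U \subset ~: inputs (E N),
        (forall u, u \in U -> par (E N) u = P) &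
        exists (kappa beta alpha : V -> R) (zeta : R),
          [/\ (forall v, v \in P -> kappa v != 0),
              (forall u, u \in U -> beta u != 0),
              (forall u, u \in U -> alpha u != 0),
              (forall u v, u \in U -> v \in P -> omega N u v = beta u * kappa v) &
              affine_symmetry rho U zeta alpha beta (theta N)]].

Definition irreducible (rho : R -> R) (N : GFNN) : Prop := ~ reducible rho N.

End GFNN.

(* Main.v *)
Require Import Defs.
From HB Require Import structures.
From mathcomp Require Import all_boot all_order all_algebra.
From mathcomp Require Import reals sequences.
From mathcomp.analysis Require Import exp.
From mathcomp Require Import ring lra.
From Stdlib Require Import Classical.
Import Order.TTheory GRing.Theory Num.Theory.
Local Open Scope ring_scope.
Section GP.
Variables (R : realType) (J : finType) (C lam : J -> R) (Lam M : R).

Lemma exp_small (D K d : R) : 0 < d -> 0 <= K ->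
  (forall t : R, t <= 0 -> `|D| <= K * expR (d * t)) -> D = 0.
Proof.
move=> d0 K0 H; apply/eqP; apply: contraT => hD.
have aD : 0 < `|D| by rewrite normr_gt0.
pose eps := `|D| / (2 * (K + 1)).
have eps0 : 0 < eps by rewrite /eps divr_gt0 //; lra.
pose t := Num.min 0 (ln eps / d).
have t0 : t <= 0 by rewrite /t ge_min lexx.
have := H t t0.
have : expR (d * t) <= eps.
  rewrite -[X in _ <= X](lnK eps0) ler_expR.
  have : t <= ln eps / d by rewrite /t ge_min lexx orbT.
  by rewrite ler_pdivlMr // mulrC.
move=> he hb.
have : `|D| <= K * eps.
  apply: (le_trans hb); apply: ler_wpM2l => //.
rewrite /eps => h2.
have : K * (`|D| / (2 * (K + 1))) = `|D| * (K / (2 * (K+1))) by rewrite mulrCA.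
move=> e; rewrite e in h2.
have : K / (2 * (K + 1)) < 1.
  by rewrite ltr_pdivrMr; lra.
move=> h3.
have : `|D| * (K / (2 * (K + 1))) < `|D| by rewrite gtr_pMr.
lra.
Qed.

End GP.
Section GP2.
Variables (R : realType) (J : finType) (C lam : J -> R) (Lam M : R).

Lemma gp_unique n (A : {set J}) : (#|A| <= n)%N ->
  (forall t : R, t <= 0 ->
     `|\sum_(j in A) C j * expR (lam j * t)| <= M * expR (Lam * t)) ->
  forall mu, mu < Lam -> \sum_(j in A | lam j == mu) C j = 0.
Proof.
elim: n A => [|n IH] A hA hB mu hmu.
  have -> : A = set0 by apply/eqP; rewrite -cards_eq0 -leqn0.
  by rewrite big1 // => j; rewrite inE.
have [->|/set0Pn [j0 j0A]] := eqVneq A set0.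
  by rewrite big1 // => j; rewrite inE.
case: (@arg_minP _ R J j0 (mem A) lam j0A) => jm jmA jmin.
set mu0 := lam jm.
have [hL|hL] := leP Lam mu0.
  rewrite big1 // => j /andP [jA /eqP ej].
  by have := jmin j jA; rewrite -/mu0 ej; lra.
pose G0 := [set j in A | lam j == mu0].
pose A' := A :\: G0.
have A'gt : forall j, j \in A' -> mu0 < lam j.
  move=> j; rewrite !inE negb_and => /andP [/orP [/negP//|hne] jA].
  by rewrite lt_neqAle eq_sym hne jmin.
have AG : A :&: G0 = G0.
  by apply/setP => j; rewrite !inE; case: (j \in A); rewrite ?andbF.
pose D0 := \sum_(j in G0) C j.
have splitA : forall t, \sum_(j in A) C j * expR (lam j * t) =
   D0 * expR (mu0 * t) + \sum_(j in A') C j * expR (lam j * t).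
  move=> t; rewrite (big_setID G0) /= AG; congr (_ + _).
  rewrite /D0 big_distrl /=; apply: eq_bigr => j; rewrite inE => /andP [_ /eqP ->].
  done.
pose d := \big[Num.min/(Lam - mu0)]_(j in A') (lam j - mu0).
have d0 : 0 < d.
  rewrite /d; apply: (big_ind (fun x => 0 < x)); first lra.
    by move=> x y hx hy; rewrite lt_min hx hy.
  by move=> j /A'gt; lra.
have dle : forall j, j \in A' -> d <= lam j - mu0.
  move=> j jA; rewrite /d (bigD1 j) //= ge_min lexx //.
have dL : d <= Lam - mu0.
  rewrite /d; elim/big_rec: _ => [|j x _ hx]; first exact: lexx.
  by rewrite ge_min hx orbT.
have D00 : D0 = 0.
  apply: (@exp_small _ D0 (\sum_(j in A') `|C j| + `|M|) d d0).
    by rewrite addr_ge0 // sumr_ge0.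
  move=> t t0.
  have e0 : 0 < expR (mu0 * t) by apply: expR_gt0.
  have b1 : `|D0| * expR (mu0 * t) <=
      M * expR (Lam * t) + \sum_(j in A') `|C j| * expR (lam j * t).
    have := hB t t0; rewrite splitA.
    set X := \sum_(j in A') _ => hX.
    have hX2 : `|X| <= \sum_(j in A') `|C j| * expR (lam j * t).
      apply: (le_trans (ler_norm_sum _ _ _)); apply: ler_sum => j _.
      by rewrite normrM (ger0_norm (expR_ge0 _)).
    have : `|D0 * expR (mu0 * t)| <= `|D0 * expR (mu0 * t) + X| + `|X|.
      have -> : D0 * expR (mu0 * t) = (D0 * expR (mu0 * t) + X) - X by ring.
      apply: (le_trans (ler_normB _ _)).
      by rewrite addrK.
    rewrite normrM (ger0_norm (expR_ge0 _)); lra.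
  have b2 : M * expR (Lam * t) <= `|M| * (expR (mu0 * t) * expR (d * t)).
    apply: (le_trans (ler_wpM2r (expR_ge0 _) (ler_norm M))).
    apply: ler_wpM2l => //; rewrite -expRD ler_expR.
    have : 0 <= (Lam - mu0 - d) * (- t) by apply: mulr_ge0; lra.
    lra.
  have b3 : \sum_(j in A') `|C j| * expR (lam j * t) <=
      (\sum_(j in A') `|C j|) * (expR (mu0 * t) * expR (d * t)).
    rewrite big_distrl /=; apply: ler_sum => j jA.
    apply: ler_wpM2l => //; rewrite -expRD ler_expR.
    have := dle j jA => hd.
    have : 0 <= (lam j - mu0 - d) * (- t) by apply: mulr_ge0; lra.
    lra.
  have : `|D0| * expR (mu0 * t) <=
     ((\sum_(j in A') `|C j| + `|M|) * expR (d * t)) * expR (mu0 * t).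
    have -> : ((\sum_(j in A') `|C j| + `|M|) * expR (d * t)) * expR (mu0 * t)
      = `|M| * (expR (mu0 * t) * expR (d * t)) +
        (\sum_(j in A') `|C j|) * (expR (mu0 * t) * expR (d * t)) by ring.
    lra.
  by rewrite ler_pM2r.
have hA' : (#|A'| <= n)%N.
  have : (#|A'| < #|A|)%N.
    apply: proper_card; rewrite properE subsetDl /=.
    apply/subsetPn; exists jm; first exact: jmA.
    have jmA' : jm \in A := jmA.
    by rewrite !inE jmA' /mu0 eqxx.
  move=> h; have := leq_trans h hA; by rewrite ltnS.
have hB' : forall t : R, t <= 0 ->
     `|\sum_(j in A') C j * expR (lam j * t)| <= M * expR (Lam * t).
  by move=> t t0; have := hB t t0; rewrite splitA D00 mul0r add0r.
rewrite (big_setIDcond _ _ G0) /= (IH A' hA' hB' mu hmu) addr0 AG.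
have [emu|nmu] := eqVneq mu mu0.
  transitivity D0; last exact: D00.
  rewrite /D0; apply: eq_bigl => j; rewrite emu.
  by case: (boolP (j \in G0)) => //; rewrite inE => /andP [_ ->].
rewrite big1 // => j /andP [] ; rewrite inE => /andP [_ /eqP ->].
by rewrite eq_sym (negbTE nmu).
Qed.

End GP2.
Lemma big_opt (R : realType) (X : finType) (F : option X -> R) :
  \sum_j F j = F None + \sum_x F (Some x).
Proof.
rewrite (bigD1 None) //=; congr (_ + _).
rewrite (reindex_omap Some id) /=; last by case.
by apply: eq_bigl => x; rewrite eqxx.
Qed.

Lemma tanh_w (R : realType) (x : R) :
  tanh x = 2 * (expR (2 * x) / (1 + expR (2 * x))) - 1.
Proof.
rewrite /tanh expRN (expRM_natl 2 x).
have e0 : 0 < expR x := expR_gt0 x.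
have h1 : expR x + (expR x)^-1 != 0.
  by apply/lt0r_neq0; rewrite addr_gt0 // invr_gt0.
have h2 : 1 + expR x ^+ 2 != 0 by apply/lt0r_neq0; rewrite ltr_wpDr // sqr_ge0.
have h3 : expR x != 0 by apply/lt0r_neq0.
field.
by rewrite h2 h3.
Qed.

Lemma geom_exp (R : realType) (w : R) (K : nat) : 1 + w != 0 ->
  w / (1 + w) = \sum_(k < K) (-1) ^+ k * w ^+ k.+1 + (-1) ^+ K * w ^+ K.+1 / (1 + w).
Proof.
move=> hw; elim: K => [|K IH]; first by rewrite big_ord0 add0r expr0 mul1r expr1.
rewrite big_ord_recr /= IH -addrA; congr (_ + _).
rewrite exprS !exprS; field => //.
Qed.
Lemma T_one {R : realType} {m be : R} : 0 < m -> m < be ->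
  exists T : nat, (0 < T)%N /\ forall j k : nat, (1 + T * j)%:R * m != k%:R * be.
Proof.
move=> m0 mb.
case: (classic (exists k0 k1 : nat, (0 < k0)%N /\ k0%:R * m = k1%:R * be)).
  move=> [k0 [k1 [k00 e]]]; exists k0; split => // j k; apply/eqP => e2.
  have e3 : m = (k%:R - (j * k1)%:R) * be.
    rewrite mulrBl -e2 natrM -mulrA -e natrD natrM; ring.
  have [hk|hk] := leqP k (j * k1).
    have : k%:R - (j * k1)%:R <= 0 :> R by rewrite subr_le0 ler_nat.
    move=> h; have : (k%:R - (j * k1)%:R) * be <= 0 by rewrite mulr_le0_ge0 //; lra.
    lra.
  have : 1 <= k%:R - (j * k1)%:R :> R.
    by rewrite lerBrDr nat1r ler_nat.
  move=> h; have : be <= (k%:R - (j * k1)%:R) * be.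
    rewrite -[X in X <= _]mul1r ler_wpM2r //; lra.
  lra.
move=> hn; exists 1%N; split => // j k; apply/eqP => e; apply: hn.
exists (1 + 1 * j)%N, k; split => //.
Qed.

Lemma T_exists (R : realType) (I : finType) (S : {set I}) (b : I -> R) (m : R) :
  0 < m -> exists T : nat, (0 < T)%N /\
    forall s, s \in S -> m < b s -> forall j k : nat, (1 + T * j)%:R * m != k%:R * b s.
Proof.
move=> m0.
suff : forall l : seq I, exists T : nat, (0 < T)%N /\
    forall s, s \in l -> m < b s -> forall j k : nat, (1 + T * j)%:R * m != k%:R * b s.
  move=> /(_ (enum S)) [T [T0 H]]; exists T; split => // s sS; apply: H.
  by rewrite mem_enum.
elim => [|s l [T [T0 H]]]; first by exists 1%N.
have [hb|hb] := ltP m (b s).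
  have [T1 [T10 H1]] := T_one m0 hb.
  exists (T * T1)%N; split; first by rewrite muln_gt0 T0.
  move=> s'; rewrite inE => /orP [/eqP ->|s'l] hs' j k.
    by rewrite (mulnC T T1) -mulnA; apply: H1.
  by rewrite -mulnA; apply: H.
exists T; split => // s'; rewrite inE => /orP [/eqP ->|s'l]; first by move=> h; lra.
exact: H.
Qed.
Lemma vander (R : realType) (I : finType) (G : {set I}) (be r : I -> R) :
  {in G &, injective r} -> (forall j : nat, \sum_(s in G) be s * r s ^+ j = 0) ->
  forall s0, s0 \in G -> be s0 = 0.
Proof.
move=> rinj H s0 s0G.
pose p := \prod_(s in G | s != s0) ('X - (r s)%:P).
have E1 : \sum_(s in G) be s * p.[r s] = 0.
  under eq_bigr => s _ do rewrite horner_coef big_distrr /=.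
  rewrite exchange_big /=; apply: big1 => i _.
  under eq_bigr => s _ do rewrite mulrCA.
  by rewrite -big_distrr /= H mulr0.
have E2 : \sum_(s in G) be s * p.[r s] = be s0 * p.[r s0].
  rewrite (bigD1 s0) //= big1 ?addr0 // => s /andP [sG ss0].
  rewrite /p horner_prod (bigD1 s) ?sG //= hornerXsubC subrr mul0r mulr0 //.
have E3 : p.[r s0] != 0.
  rewrite /p horner_prod; apply/prodf_neq0 => s /andP [sG ss0].
  rewrite hornerXsubC subr_eq0; apply/eqP => e.
  by move/eqP: ss0; apply; apply: rinj.
apply/eqP; move: E1; rewrite E2 => /eqP; rewrite mulf_eq0 (negbTE E3) orbF.
done.
Qed.
Section KeyStep.
Variables (R : realType) (I : finType) (S : {set I}) (al b c : I -> R) (zeta m : R).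
Hypotheses (m0 : 0 < m) (mmin : forall s, s \in S -> m <= b s)
  (Hid : forall t, \sum_(s in S) al s * tanh (b s * t + c s) = zeta).

Lemma coefK (K' : nat) :
  (forall s, s \in S -> m < b s -> forall k : nat, K'.+1%:R * m != k%:R * b s) ->
  \sum_(s in [set s in S | b s == m]) al s * expR (2 * c s) ^+ K'.+1 = 0.
Proof.
move=> HT.
pose a s := expR (2 * c s).
pose w s t := expR (2 * (b s * t + c s)).
pose Z := (zeta + \sum_(s in S) al s) / 2.
have F1 : forall t, \sum_(s in S) al s * (w s t / (1 + w s t)) = Z.
  move=> t; have := Hid t; under eq_bigr => s _ do rewrite tanh_w.
  have -> : \sum_(s in S) al s * (2 * (expR (2 * (b s * t + c s)) /
       (1 + expR (2 * (b s * t + c s)))) - 1) =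
    2 * \sum_(s in S) al s * (w s t / (1 + w s t)) - \sum_(s in S) al s.
    by rewrite mulr_sumr -sumrB; apply: eq_bigr => s _; rewrite /w; ring.
  by rewrite /Z => <-; field.
have Ew : forall s t k, w s t ^+ k = a s ^+ k * expR ((2 * k%:R * b s) * t).
  by move=> s t k; rewrite /w /a -!expRM_natl -expRD; congr expR; ring.
pose J := option (I * 'I_K'.+1).
pose Cf : J -> R := fun j => match j with None => - Z | Some p =>
   if p.1 \in S then al p.1 * (-1) ^+ p.2 * a p.1 ^+ p.2.+1 else 0 end.
pose lm : J -> R := fun j => match j with None => 0 | Some p =>
   2 * p.2.+1%:R * b p.1 end.
have pairE : forall (F : I * 'I_K'.+1 -> R), \sum_x F x = \sum_s \sum_k F (s, k).
  by move=> F; rewrite pair_bigA; apply: eq_bigr => -[].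
have Esum : forall t, \sum_(j in [set: J]) Cf j * expR (lm j * t) =
   - Z + \sum_(s in S) al s * \sum_(k < K'.+1) (-1) ^+ k * w s t ^+ k.+1.
  move=> t; rewrite (eq_bigl (fun=> true)); last by move=> j; rewrite inE.
  rewrite big_opt /= mul0r expR0 mulr1; congr (_ + _).
  rewrite pairE [RHS]big_mkcond /=; apply: eq_bigr => s _.
  case: (s \in S) => /=; last by rewrite big1 // => k _; rewrite mul0r.
  rewrite big_distrr /=; apply: eq_bigr => k _; rewrite Ew /a; ring.
pose Lam := 2 * K'.+2%:R * m.
pose M := \sum_(s in S) `|al s| * a s ^+ K'.+2.
have Bound : forall t, t <= 0 ->
    `|\sum_(j in [set: J]) Cf j * expR (lm j * t)| <= M * expR (Lam * t).
  move=> t t0; rewrite Esum.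
  have -> : - Z + \sum_(s in S) al s * \sum_(k < K'.+1) (-1) ^+ k * w s t ^+ k.+1
     = - \sum_(s in S) al s * ((-1) ^+ K'.+1 * w s t ^+ K'.+2 / (1 + w s t)).
    rewrite -(F1 t) -!sumrN -big_split /=; apply: eq_bigr => s _.
    have hw : 1 + w s t != 0 by apply/lt0r_neq0; rewrite ltr_wpDr ?expR_ge0.
    rewrite (@geom_exp _ _ K'.+1 hw); ring.
  rewrite normrN /M big_distrl /=.
  apply: (le_trans (ler_norm_sum _ _ _)); apply: ler_sum => s sS.
  rewrite normrM -[X in _ <= X]mulrA; apply: ler_wpM2l => //.
  have w0 : 0 < w s t by apply: expR_gt0.
  rewrite -mulrA normrM normr_sign mul1r ger0_norm; last first.
    by rewrite divr_ge0 ?exprn_ge0 ?addr_ge0 ?(ltW w0).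
  apply: (@le_trans _ _ (w s t ^+ K'.+2)).
    rewrite ler_pdivrMr ?ltr_wpDr ?(ltW w0) //.
    by rewrite ler_peMr ?exprn_ge0 ?(ltW w0) // lerDl ltW.
  rewrite Ew; apply: ler_wpM2l; first by rewrite exprn_ge0 // expR_ge0.
  rewrite ler_expR /Lam.
  have := mmin s sS => hm.
  have hK : (0:R) <= K'.+2%:R := ler0n _ _.
  have : 0 <= 2 * K'.+2%:R * (b s - m) * (- t).
    by apply: mulr_ge0; [apply: mulr_ge0; [apply: mulr_ge0|] |]; lra.
  nra.
have mu_lt : 2 * K'.+1%:R * m < Lam.
  rewrite /Lam ltr_pM2r // ltr_pM2l // ltr_nat //.
have := @gp_unique R J Cf lm Lam M _ [set: J] (leqnn _) Bound _ mu_lt.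
rewrite (eq_bigl (fun j => lm j == 2 * K'.+1%:R * m)); last by move=> j; rewrite inE.
rewrite big_mkcond big_opt /=.
have -> : (0 == 2 * K'.+1%:R * m) = false.
  by apply/negbTE; rewrite eq_sym; apply/lt0r_neq0; rewrite !mulr_gt0.
rewrite add0r pairE.
have -> : \sum_s \sum_(k < K'.+1)
   (if lm (Some (s, k)) == 2 * K'.+1%:R * m then Cf (Some (s, k)) else 0) =
   (-1) ^+ K' * \sum_(s in [set s in S | b s == m]) al s * a s ^+ K'.+1.
  rewrite big_distrr /= [RHS]big_mkcond /=; apply: eq_bigr => s _.
  rewrite inE /=.
  case sS: (s \in S) => /=; last by rewrite big1 // => k _; case: ifP.
  case: (eqVneq (b s) m) => [bm|bm] /=.
    rewrite -big_mkcond /= (big_pred1 ord_max).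
      rewrite /Cf /=; ring.
    move=> k /=; rewrite bm.
    apply/idP/idP => [/eqP e|/eqP ->].
      have e2 : (k.+1)%:R = K'.+1%:R :> R.
        apply: (mulIf (lt0r_neq0 m0)); apply: (mulfI (x := 2)) => //.
        by apply/lt0r_neq0; lra.
      by rewrite !mulrA; exact: e.
      by move/eqP: e2; rewrite eqr_nat eqSS => h; exact: h.
    by rewrite /=.
  rewrite big1 // => k _.
  have hb : m < b s by rewrite lt_neqAle eq_sym bm mmin.
  have := HT s sS hb k.+1 => hne.
  case: ifP => // /eqP e; exfalso; move/eqP: hne; apply.
  apply: (mulfI (x := 2)); first by apply/lt0r_neq0; lra.
  by rewrite /= !mulrA; symmetry; exact: e.
move=> /eqP; rewrite mulf_eq0 signr_eq0 /= => /eqP.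
done.
Qed.

End KeyStep.
Lemma key_pos (R : realType) (I : finType) n (S : {set I}) (al b c : I -> R) zeta :
  (#|S| <= n)%N -> (forall s, s \in S -> 0 < b s) ->
  (forall s s', s \in S -> s' \in S -> b s = b s' -> c s = c s' -> s = s') ->
  (forall t, \sum_(s in S) al s * tanh (b s * t + c s) = zeta) ->
  forall s, s \in S -> al s = 0.
Proof.
elim: n S zeta => [|n IH] S zeta hS bpos cinj Hid.
  have -> : S = set0 by apply/eqP; rewrite -cards_eq0 -leqn0.
  by move=> s; rewrite inE.
have [->|/set0Pn [s0 s0S]] := eqVneq S set0; first by move=> s; rewrite inE.
case: (@arg_minP _ R I s0 (mem S) b s0S) => sm smS smin.
set m := b sm.
have m0 : 0 < m := bpos sm smS.
have mmin : forall s, s \in S -> m <= b s by move=> s sS; apply: smin.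
have [T [T0 HT]] := @T_exists R I S b m m0.
pose G := [set s in S | b s == m].
have hG : forall s, s \in G -> al s = 0.
  pose a s := expR (2 * c s).
  have a0 : forall s, 0 < a s by move=> s; apply: expR_gt0.
  have := @vander R I G (fun s => al s * a s) (fun s => a s ^+ T).
  move=> V s sG.
  have : al s * a s = 0.
    apply: V sG.
      move=> x y; rewrite !inE => /andP [xS /eqP bx] /andP [yS /eqP byy] /eqP.
      rewrite eqrXn2 ?(ltW (a0 _)) // => /eqP /expR_inj e.
      apply: cinj => //; first by rewrite bx byy.
      have : 2 * c x = 2 * c y := e.
      lra.
    move=> j.
    have HT' : forall s', s' \in S -> m < b s' -> forall k : nat,
        (T * j).+1%:R * m != k%:R * b s'.
      by move=> s' s'S hb k; rewrite -add1n; apply: HT.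
    have := @coefK R I S al b c zeta m m0 mmin Hid (T * j) HT'.
    rewrite -/G.
    move=> e; rewrite -[RHS]e; apply: eq_bigr => s' _.
    by rewrite /a -exprM -mulrA -exprS.
  by move=> /eqP; rewrite mulf_eq0 (negbTE (lt0r_neq0 (a0 s))) orbF => /eqP.
pose S' := S :\: G.
have hS' : (#|S'| <= n)%N.
  have : (#|S'| < #|S|)%N.
    apply: proper_card; rewrite properE subsetDl /=.
    apply/subsetPn; exists sm; first exact: smS.
    have smA : sm \in S := smS.
    by rewrite !inE smA /m eqxx.
  move=> h; have := leq_trans h hS; by rewrite ltnS.
have Hid' : forall t, \sum_(s in S') al s * tanh (b s * t + c s) = zeta.
  move=> t; rewrite -(Hid t) [RHS](big_setID G) /=.
  rewrite [X in _ = X + _]big1 ?add0r // => s; rewrite inE => /andP [_ sG].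
  by rewrite hG // mul0r.
have IH' := IH S' zeta hS'.
move=> s sS; case: (boolP (s \in G)) => [sG|nG]; first exact: hG.
apply: (IH' _ _ Hid') => //.
- by move=> x; rewrite inE => /andP [_ xS]; apply: bpos.
- by move=> x y; rewrite !inE => /andP [_ xS] /andP [_ yS]; apply: cinj.
- by rewrite inE nG.
Qed.
Lemma tanhN (R : realType) (x : R) : tanh (- x) = - tanh x.
Proof. by rewrite /tanh opprK [expR (- x) + expR x]addrC -mulNr opprB. Qed.

Lemma key_gen (R : realType) (I : finType) (S : {set I}) (al be ga : I -> R) zeta :
  (forall s, s \in S -> be s != 0) ->
  (forall t, \sum_(s in S) al s * tanh (be s * t + ga s) = zeta) ->
  (forall s, s \in S -> al s != 0) -> S != set0 ->
  exists s1 s2 (sg : R), [/\ s1 \in S, s2 \in S, s1 != s2, (sg = 1 \/ sg = -1) &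
     be s1 = sg * be s2 /\ ga s1 = sg * ga s2].
Proof.
move=> bne Hid ane /set0Pn [s0 s0S].
apply: NNPP => hno.
pose sg s : R := if 0 < be s then 1 else -1.
have sg2 : forall s, sg s * sg s = 1.
  by move=> s; rewrite /sg; case: ifP => _; rewrite ?mulr1 ?mulrNN ?mulr1.
have sgpm : forall s, sg s = 1 \/ sg s = -1.
  by move=> s; rewrite /sg; case: ifP => _; [left|right].
pose b s := sg s * be s.
pose c s := sg s * ga s.
pose al' s := sg s * al s.
have Hid' : forall t, \sum_(s in S) al' s * tanh (b s * t + c s) = zeta.
  move=> t; rewrite -(Hid t); apply: eq_bigr => s _.
  rewrite /al' /b /c; case: (sgpm s) => ->.
    by rewrite !mul1r.
  by rewrite !mulN1r !mulNr -opprD tanhN mulrN opprK.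
have bpos : forall s, s \in S -> 0 < b s.
  move=> s sS; rewrite /b /sg; case: ifP => h; first by rewrite mul1r.
  rewrite mulN1r oppr_gt0 lt_neqAle (bne s sS) /=.
  by rewrite leNgt h.
have cinj : forall s s', s \in S -> s' \in S -> b s = b s' -> c s = c s' -> s = s'.
  move=> s s' sS s'S eb ec.
  case: (eqVneq s s') => // hne; exfalso; apply: hno.
  exists s, s', (sg s * sg s'); split => //.
    case: (sgpm s) => ->; case: (sgpm s') => ->;
      rewrite ?mulr1 ?mul1r ?mulrNN ?mulr1 ?mulN1r ?opprK; by [left|right].
  split.
    have : sg s * b s = sg s * b s' by rewrite eb.
    by rewrite /b !mulrA sg2 mul1r => ->.
  have : sg s * c s = sg s * c s' by rewrite ec.
  by rewrite /c !mulrA sg2 mul1r => ->.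
have H0 := @key_pos R I #|S| S al' b c zeta (leqnn _) bpos cinj Hid'.
have := H0 s0 s0S; rewrite /al' => /eqP.
  rewrite mulf_eq0 (negbTE (ane s0 s0S)) orbF.
  by case: (sgpm s0) => -> /eqP; lra.
Qed.
Lemma tanh0 (R : realType) : tanh (0 : R) = 0.
Proof. by rewrite /tanh oppr0 subrr mul0r. Qed.

Lemma tanh1_neq0 (R : realType) : tanh (1 : R) != 0.
Proof.
rewrite /tanh mulf_neq0 //.
  rewrite subr_eq0; apply/eqP => /expR_inj e.
  by have : (1 : R) = -1 := e; lra.
by rewrite invr_neq0 // lt0r_neq0 // addr_gt0 // expR_gt0.
Qed.

Lemma not_lindep_small (R : realType) (I : finType) (S' : {set I}) (beta gamma : I -> R) :
  (#|S'| <= 1)%N -> (forall s, s \in S' -> beta s != 0) ->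
  ~ lin_dep_with_one (@tanh R) S' beta gamma.
Proof.
move=> hc hb [c [c0 [hnz hid]]].
have [/eqP e0|e1] := eqVneq #|S'| 0%N.
  move: e0; rewrite cards_eq0 => /eqP e0; subst S'.
  have := hid 0; rewrite big_set0 add0r => e; subst c0.
  by case: hnz => [/eqP//|[s]]; rewrite inE.
have /cards1P [u eu] : #|S'| == 1%N.
  by rewrite eqn_leq hc lt0n e1.
subst S'.
have bu : beta u != 0 by apply: hb; rewrite inE.
have := hid (- gamma u / beta u); rewrite big_set1.
have -> : beta u * (- gamma u / beta u) + gamma u = 0 by field.
rewrite tanh0 mulr0 add0r => ec0; subst c0.
have := hid ((1 - gamma u) / beta u); rewrite big_set1 addr0.
have -> : beta u * ((1 - gamma u) / beta u) + gamma u = 1 by field.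
move=> /eqP; rewrite mulf_eq0 (negbTE (tanh1_neq0 R)) orbF => /eqP cu.
case: hnz => [/eqP//|[s]]; rewrite inE => /eqP -> .
by rewrite cu eqxx.
Qed.

Theorem lemma1 (R : realType) (V : finType) (N : GFNN R V) :
  irreducible (@tanh R) N <->
  ~ (exists (u1 u2 : V) (s : R),
        [/\ u1 \notin inputs (E N), u2 \notin inputs (E N), u1 != u2 &
            (s = 1 \/ s = -1)] /\
        [/\ par (E N) u1 = par (E N) u2,
            (forall v, v \in par (E N) u1 -> omega N u1 v = s * omega N u2 v) &
            theta N u1 = s * theta N u2]).
Proof.
split.
  move=> H [u1 [u2 [s [[h1 h2 hne hs] [hp hom hth]]]]]; apply: H.
  have s0 : s != 0 by case: hs => ->; apply/eqP; lra.
  exists [set u1; u2], (par (E N) u1); split.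
  - by apply/set0Pn; exists u1; rewrite !inE eqxx.
  - by apply/subsetP => u /set2P [] ->; rewrite in_setC.
  - by move=> u; rewrite !inE => /orP [] /eqP ->.
  exists (fun v => omega N u2 v), (fun u => if u == u1 then s else 1),
    (fun u => if u == u1 then 1 else - s), 0; split.
  - move=> v; rewrite hp inE => hv; exact: omega_neq0.
  - by move=> u _; case: ifP => _ //; rewrite oner_neq0.
  - by move=> u _; case: ifP => _; rewrite ?oner_neq0 ?oppr_eq0.
  - move=> u v /set2P [] -> hv.
      by rewrite eqxx; apply: hom.
    by rewrite eq_sym (negbTE hne) mul1r.
  split.
  - by apply/set0Pn; exists u1; rewrite !inE eqxx.
  - move=> t; rewrite big_setU1 /=; last by rewrite inE.
    rewrite big_set1 eqxx eq_sym (negbTE hne) hth mul1r mul1r.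
    case: hs => ->; first by rewrite !mul1r mulN1r subrr.
    by rewrite !mulN1r -opprD tanhN opprK mul1r addNr.
  - move=> S' hS'; apply: not_lindep_small.
      have := proper_card hS'; rewrite cards2 hne.
      by [].
    by move=> u _; case: ifP => _ //; rewrite oner_neq0.
move=> hnp [U [P [hU hUin hpar [kappa [beta [alpha [zeta [hk hb ha hom hsym]]]]]]]].
case: hsym => _ hid _.
have [s1 [s2 [sg [s1U s2U hne hsg [eb eg]]]]] :=
  @key_gen R V U alpha beta (theta N) zeta hb hid ha hU.
apply: hnp; exists s1, s2, sg; split; first split => //.
- by have := subsetP hUin s1 s1U; rewrite inE.
- by have := subsetP hUin s2 s2U; rewrite inE.
split => //.
- by rewrite (hpar s1 s1U) (hpar s2 s2U).
- move=> v; rewrite (hpar s1 s1U) => hv.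
  by rewrite (hom s1 v s1U hv) (hom s2 v s2U hv) eb mulrA.
Qed.
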